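(* Let $k\ge n\ge1$ and let $\bar K$ be the transition matrix of the Burnside process on $\Pi_n$ (defined in the context). Let $x,y\in\Pi_n$ have $j_x$ and $j_y$ blocks respectively, and suppose $j_x\le j_y$. Then $$\bar K(x,y)=\sum_{j=j_y}^{\min(j_x+j_y,\,k)}\frac{j_x!\,j_y!}{(j-j_x)!\,(j-j_y)!\,(j_x+j_y-j)!}\,E\left[\frac{1}{(Y_j+j)^n}\right],$$ where $Y_j$ denotes the number of fixed points of a uniformly random permutation in $S_{k-j}$ (with $Y_k=0$). If $j_x>j_y$, then $\bar K(x,y)=\bar K(y,x)$.
   Context: $S_k$ acts on $[k]^n$ by $\sigma(u_1,\dots,u_n)=(\sigma(u_1),\dots,\sigma(u_n))$. The Burnside process on $[k]^n$ is the Markov chain which, from $u$, chooses $\sigma$ uniformly among permutations of $[k]$ fixing every value appearing in $u$, then produces $v\in[k]^n$ by choosing each coordinate independently and uniformly among the fixed points of $\sigma$; its transition matrix is $K(u,v)=\sum_{\sigma\in G_u\cap G_v}\frac{1}{|G_u|\,\mathrm{fp}(\sigma)^n}$ with $G_u$ the stabilizer of $u$ and $\mathrm{fp}(\sigma)$ the number of fixed points. $\Pi_n$ is the set of set partitions of $[n]$; to $u\in[k]^n$ corresponds the set partition in which $i,j$ lie in the same block iff $u_i=u_j$, and the orbits of the action are exactly the classes of vectors with the same set partition. The Burnside process on $\Pi_n$ is the lumped chain: $\bar K(x,y)=\sum_{v\text{ with partition }y}K(u,v)$ for any $u$ with partition $x$. *)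

(* Defs.v *)
From mathcomp Require Import all_boot all_order all_algebra all_fingroup.
Set Implicit Arguments. Unset Strict Implicit. Unset Printing Implicit Defensive.
Import GRing.Theory Num.Theory.
Local Open Scope ring_scope.

Definition vec (n k : nat) := {ffun 'I_n -> 'I_k}.

Definition fp (m : nat) (s : {perm 'I_m}) : nat := #|[pred a | s a == a]|.

Definition stab (n k : nat) (u : vec n k) : {set {perm 'I_k}} :=
  [set s : {perm 'I_k} | [forall i, s (u i) == u i]].

Definition Kmat (n k : nat) (u v : vec n k) : rat :=
  \sum_(s in stab u :&: stab v)
     1 / (#|stab u|%:R * ((fp s)%:R ^+ n)).

Definition setpart (n k : nat) (u : vec n k) : {set {set 'I_n}} :=
  [set [set j | u j == u i] | i : 'I_n].

Definition is_setpart (n : nat) (x : {set {set 'I_n}}) : bool :=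
  partition x [set: 'I_n].

(* lumped chain on Pi_n: sum over v with partition y, starting from a
   (chosen) u with partition x; 0 if no such u exists (never the case
   when x is a set partition with at most k blocks). *)
Definition Kbar (n k : nat) (x y : {set {set 'I_n}}) : rat :=
  match [pick u : vec n k | setpart u == x] with
  | Some u => \sum_(v : vec n k | setpart v == y) Kmat u v
  | None => 0
  end.

Definition EY (n k j : nat) : rat :=
  (\sum_(s : {perm 'I_(k - j)}) 1 / ((fp s + j)%:R ^+ n))
    / #|{perm 'I_(k - j)}|%:R.

(* Main.v *)
Require Import Defs.
From mathcomp Require Import all_boot all_order all_algebra all_fingroup.
From mathcomp Require Import zify.
From mathcomp.algebra_tactics Require Import ring.
Set Implicit Arguments. Unset Strict Implicit. Unset Printing Implicit Defensive.
Import GRing.Theory Num.Theory.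

Section PartA.
Local Open Scope ring_scope.

Definition fpT (T : finType) (s : {perm T}) : nat := #|[pred a | s a == a]|.

Section Transport.
Variables (T1 T2 : finType) (h : T1 -> T2) (g : T2 -> T1).
Hypotheses (hK : cancel h g) (gK : cancel g h).

Definition conjf (q : {perm T2}) : T1 -> T1 := fun x => g (q (h x)).
Lemma conjf_inj q : injective (conjf q).
Proof. by move=> x y /(can_inj gK) /perm_inj /(can_inj hK). Qed.
Definition conjp q : {perm T1} := perm (@conjf_inj q).

Definition conjf' (p : {perm T1}) : T2 -> T2 := fun y => h (p (g y)).
Lemma conjf'_inj p : injective (conjf' p).
Proof. by move=> x y /(can_inj hK) /perm_inj /(can_inj gK). Qed.
Definition conjp' p : {perm T2} := perm (@conjf'_inj p).

Lemma fpT_conj q : fpT (conjp q) = fpT q.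
Proof.
rewrite /fpT -(card_image (can_inj hK)).
apply: eq_card => y; rewrite !inE.
apply/imageP/idP => [[x]|].
  by rewrite inE /= permE /conjf => /eqP Hx ->; rewrite -{2}Hx gK.
move=> Hy; exists (g y); last by rewrite gK.
by rewrite inE permE /conjf gK (eqP Hy).
Qed.

Lemma sum_transport (R : nmodType) (F : nat -> R) :
  \sum_(p : {perm T1}) F (fpT p) = \sum_(q : {perm T2}) F (fpT q).
Proof.
rewrite (reindex conjp) /=.
  by apply: eq_bigr => q _; rewrite fpT_conj.
exists conjp' => p _; apply/permP => x.
  by rewrite permE /conjf' permE /conjf !gK.
by rewrite permE /conjf permE /conjf' !hK.
Qed.
End Transport.

End PartA.
Section PartB.
Local Open Scope ring_scope.

Section Ext.
Variables (T : finType) (S : {set T}).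
Notation sT := {x : T | x \in S}.

Definition extf (p : {perm sT}) (t : T) : T := oapp (fun x => val (p x)) t (insub t).
Lemma extf_inj p : injective (extf p).
Proof.
move=> x y; rewrite /extf.
case: insubP => [u Hu <-|Hx]; case: insubP => [v Hv <-|Hy] //=.
- by move/val_inj/perm_inj => ->.
- by move=> E; rewrite -E (valP (p u)) in Hy.
- by move=> E; rewrite E (valP (p v)) in Hx.
Qed.
Definition extp p : {perm T} := perm (@extf_inj p).

Lemma extpE p (x : sT) : extp p (val x) = val (p x).
Proof. by rewrite permE /extf valK. Qed.
Lemma extp_out p t : t \notin S -> extp p t = t.
Proof. by move=> Ht; rewrite permE /extf insubN. Qed.

Lemma extp_on p : perm_on S (extp p).
Proof.
apply/subsetP => t; rewrite inE; apply: contraR => Ht.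
by rewrite extp_out.
Qed.

Definition resf (s : {perm T}) : {ffun sT -> sT} := [ffun x => insubd x (s (val x))].
Definition resp (s : {perm T}) : {perm sT} := insubd (1%g : {perm sT}) (resf s).

Lemma resf_inj s : perm_on S s -> injectiveb (resf s).
Proof.
move=> Hs; apply/injectiveP => x y; rewrite !ffunE => E.
apply: val_inj; apply: (@perm_inj _ s).
have := congr1 val E.
by rewrite !val_insubd !perm_closed // (valP x) (valP y).
Qed.

Lemma respE s (x : sT) : perm_on S s -> val (resp s x) = s (val x).
Proof.
move=> Hs; rewrite /resp -pvalE insubdK; last exact: resf_inj.
by rewrite ffunE val_insubd perm_closed // (valP x).
Qed.

Lemma extpK p : resp (extp p) = p.
Proof.
apply/permP => x; apply: val_inj.
by rewrite respE ?extp_on // extpE.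
Qed.

Lemma respK s : perm_on S s -> extp (resp s) = s.
Proof.
move=> Hs; apply/permP => t.
case: (boolP (t \in S)) => Ht.
  by rewrite -[t]/(val (Sub t Ht : sT)) extpE respE.
by rewrite extp_out // (out_perm Hs Ht).
Qed.

Lemma fpT_ext p : fpT (extp p) = fpT p + #|~: S|.
Proof.
have -> : fpT (extp p) = #|[set t | extp p t == t]| by rewrite /fpT cardsE.
have -> : [set t | extp p t == t] = ~: S :|: [set val x | x in [set x | p x == x]].
  apply/setP => t; rewrite !inE.
  case: (boolP (t \in S)) => Ht /=.
    rewrite -[t]/(val (Sub t Ht : sT)) extpE; apply/eqP/imsetP => [E|[x]].
      by exists (Sub t Ht) => //; rewrite inE; apply/eqP/val_inj.
    rewrite inE => /eqP E Et; have -> : (Sub t Ht : sT) = x by apply: val_inj. by rewrite E.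
  by rewrite extp_out // eqxx.
have := cardsUI (~: S) [set val x | x in [set x | p x == x]].
have -> : ~: S :&: [set val x | x in [set x | p x == x]] = set0.
  apply/setP => t; rewrite !inE; apply/negbTE; apply/negP => /andP [Ht /imsetP [x _ E]].
  by rewrite E (valP x) in Ht.
rewrite cards0 addn0 => ->.
by rewrite card_imset //; [rewrite addnC /fpT cardsE|exact: val_inj].
Qed.

Lemma sum_ext (R : nmodType) (F : nat -> R) :
  \sum_(s | perm_on S s) F (fpT s) = \sum_(p : {perm sT}) F (fpT p + #|~: S|).
Proof.
rewrite (reindex_onto extp resp) /=; last by move=> s Hs; rewrite respK.
apply: eq_big => [p|p _]; first by rewrite extp_on extpK eqxx.
by rewrite fpT_ext.
Qed.
End Ext.

End PartB.
Section PartC.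
Local Open Scope ring_scope.

Lemma sum_perm_on (T : finType) (S : {set T}) m (R : nmodType) (F : nat -> R) :
  #|S| = m ->
  \sum_(s | perm_on S s) F (fpT s) = \sum_(p : {perm 'I_m}) F (fp p + #|~: S|).
Proof.
move=> Hm; rewrite sum_ext.
have E : #|{: {x : T | x \in S}}| = m by rewrite card_sig -Hm; apply: eq_card.
pose h (x : {x : T | x \in S}) : 'I_m := cast_ord E (enum_rank x).
pose g (i : 'I_m) : {x : T | x \in S} := enum_val (cast_ord (esym E) i).
have hK : cancel h g by move=> x; rewrite /g /h cast_ordK enum_rankK.
have gK : cancel g h by move=> i; rewrite /g /h enum_valK cast_ordKV.
exact: (sum_transport hK gK (fun j => F (j + #|~: S|))).
Qed.

End PartC.
Section PartD.

Definition im n k (v : vec n k) : {set 'I_k} := [set v i | i : 'I_n].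

Section Part.
Variables (n : nat) (y : {set {set 'I_n}}).
Hypothesis Hy : is_setpart y.

Lemma Hcov : cover y = setT. Proof. by case/and3P: Hy => /eqP. Qed.
Lemma Htriv : trivIset y. Proof. by case/and3P: Hy. Qed.
Lemma H0 : set0 \notin y. Proof. by case/and3P: Hy. Qed.

Lemma pblock_in i : pblock y i \in y.
Proof. by apply: pblock_mem; rewrite Hcov inE. Qed.

Lemma pblock_im : [set pblock y i | i : 'I_n] = y.
Proof.
apply/setP => B; apply/imsetP/idP => [[i _ ->]|HB]; first exact: pblock_in.
have : B != set0 by apply: contraNneq H0 => <-.
case/set0Pn => i Hi; exists i => //.
by rewrite (def_pblock Htriv HB Hi).
Qed.

Lemma card_part : (#|y| <= n)%N.
Proof. by rewrite -pblock_im (leq_trans (leq_imset_card _ _)) // ?cardsT card_ord. Qed.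

Lemma eq_pblock2 i j : (pblock y i == pblock y j) = (j \in pblock y i).
Proof. by rewrite eq_pblock ?Htriv // Hcov inE. Qed.

Lemma KL1 k (v : vec n k) : setpart v = y ->
  forall i j, (v i == v j) = (pblock y i == pblock y j).
Proof.
move=> Hv.
have Pb : forall i, pblock y i = [set l | v l == v i].
  move=> i; apply: def_pblock; first exact: Htriv.
    by rewrite -Hv; apply/imsetP; exists i.
  by rewrite inE.
move=> i j; rewrite eq_pblock2 Pb inE eq_sym.
by [].
Qed.

Lemma KL2 k (v : vec n k) : (forall i j, (v i == v j) = (pblock y i == pblock y j)) ->
  setpart v = y.
Proof.
move=> Hv; rewrite -pblock_im /setpart; apply: eq_imset => i.
apply/setP => l; rewrite inE eq_sym Hv eq_pblock2.
by [].
Qed.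
End Part.

Lemma card_kernel (I A B : finType) (f : I -> A) (g : I -> B) :
  (forall i j, (f i == f j) = (g i == g j)) -> #|[set f i | i : I]| = #|[set g i | i : I]|.
Proof.
move=> Hfg.
have E1 : #|[set (f i, g i) | i : I]| = #|[set f i | i : I]|.
  rewrite -(card_in_imset (f := fst)); first by rewrite -imset_comp.
  move=> p q /imsetP [i _ ->] /imsetP [j _ ->] /= E.
  by move: (E) => /eqP; rewrite Hfg => /eqP E'; rewrite E E'.
have E2 : #|[set (f i, g i) | i : I]| = #|[set g i | i : I]|.
  rewrite -(card_in_imset (f := snd)); first by rewrite -imset_comp.
  move=> p q /imsetP [i _ ->] /imsetP [j _ ->] /= E.
  by move: (E) => /eqP; rewrite -Hfg => /eqP E'; rewrite E E'.
by rewrite -E1 -E2.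
Qed.

Lemma card_im n k (v : vec n k) (y : {set {set 'I_n}}) :
  is_setpart y -> setpart v = y -> #|im v| = #|y|.
Proof.
move=> Hy Hv; rewrite /im -(pblock_im Hy).
exact: (card_kernel (KL1 Hy Hv)).
Qed.

End PartD.
Section PartE.

Section Count.
Variables (n k : nat) (y : {set {set 'I_n}}).
Hypothesis Hy : is_setpart y.
Variable d : 'I_k.
Notation Y := {B : {set 'I_n} | B \in y}.

Definition blk (i : 'I_n) : Y := Sub (pblock y i) (pblock_in Hy i).

Lemma blk_surj (B : Y) : exists i, blk i = B.
Proof.
have : val B != set0 by apply: contraNneq (H0 Hy) => <-; exact: (valP B).
case/set0Pn => i Hi; exists i; apply: val_inj => /=.
exact: def_pblock (Htriv Hy) (valP B) Hi.
Qed.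

Lemma blk_eq i j : (blk i == blk j) = (pblock y i == pblock y j).
Proof. by []. Qed.

Definition Phi (f : {ffun Y -> 'I_k}) : vec n k := [ffun i => f (blk i)].

Lemma Phi_inj : injective Phi.
Proof.
move=> f g E; apply/ffunP => B; have [i <-] := blk_surj B.
by have := congr1 (fun w : vec n k => w i) E; rewrite !ffunE.
Qed.

Lemma card_vC (C : {set 'I_k}) :
  #|[set v : vec n k | (setpart v == y) && (im v \subset C)]| = #|C| ^_ #|y|.
Proof.
have -> : [set v : vec n k | (setpart v == y) && (im v \subset C)] =
          Phi @: [set f in ffun_on (mem C) | injectiveb f].
  apply/setP => v; rewrite inE; apply/andP/imsetP => [[/eqP Hv HC]|[f]].
    pose f := [ffun B : Y => oapp v d [pick i in val B]].
    have Ef : Phi f = v.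
      apply/ffunP => i; rewrite !ffunE /=.
      case: pickP => [l /= Hl|H].
        by apply/eqP; rewrite (KL1 Hy Hv) eq_sym eq_pblock2.
      by have := H i; rewrite /= mem_pblock (Hcov Hy) inE.
    exists f => //; rewrite inE; apply/andP; split.
      apply/ffun_onP => B; have [i <-] := blk_surj B.
      have Efi : f (blk i) = v i by rewrite -[in RHS]Ef /Phi [RHS]ffunE.
      rewrite Efi.
      by apply: (subsetP HC); apply/imsetP; exists i.
    apply/injectiveP => B1 B2; have [i <-] := blk_surj B1; have [j <-] := blk_surj B2.
    have -> : f (blk i) = v i by rewrite -[in RHS]Ef /Phi [RHS]ffunE.
    have -> : f (blk j) = v j by rewrite -[in RHS]Ef /Phi [RHS]ffunE.
    by move/eqP; rewrite (KL1 Hy Hv) -blk_eq => /eqP.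
  rewrite inE => /andP [/ffun_onP Hf /injectiveP Hinj] ->; split.
    apply/eqP; apply: (KL2 Hy) => i j.
    by rewrite !ffunE (inj_eq Hinj).
  by apply/subsetP => t /imsetP [i _ ->]; rewrite ffunE; apply: Hf.
rewrite card_in_imset; last by move=> f g _ _; apply: Phi_inj.
by rewrite card_inj_ffuns_on card_sig.
Qed.
End Count.

End PartE.
Section PartF.

Lemma stabE n k (u : vec n k) : stab u = [set s | perm_on (~: im u) s].
Proof.
apply/setP => s; rewrite !inE; apply/forallP/subsetP => [H t|H i].
  rewrite !inE; apply: contra => /imsetP [i _ ->]; exact: H.
apply/negPn/negP => Hs; have := H (u i); rewrite !inE Hs => /(_ isT).
by apply/negP; rewrite negbK; apply/imsetP; exists i.
Qed.

Lemma stabIE n k (u v : vec n k) :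
  stab u :&: stab v = [set s | perm_on (~: (im u :|: im v)) s].
Proof.
apply/setP => s; rewrite inE !stabE !inE /perm_on; apply/andP/subsetP => [[H1 H2] t Ht|H].
  rewrite !inE negb_or; apply/andP; split.
    by have := subsetP H1 t Ht; rewrite inE.
  by have := subsetP H2 t Ht; rewrite inE.
split; apply/subsetP => t Ht; have := H t Ht; rewrite !inE negb_or => /andP [].
  by [].
by [].
Qed.

Lemma cardC_ord k (D : {set 'I_k}) : #|~: D| = (k - #|D|)%N.
Proof. have := cardsC D; rewrite card_ord; move: (#|D|) (#|~: D|) => a b E; by rewrite -E addKn. Qed.

Lemma card_stab n k (u : vec n k) : #|stab u| = (k - #|im u|)`!.
Proof. by rewrite stabE cardsE card_perm cardC_ord. Qed.

Local Open Scope ring_scope.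

Lemma Kmat_val n k (u v : vec n k) :
  Kmat u v = ((k - #|im u :|: im v|)`!)%:R / ((k - #|im u|)`!)%:R
             * EY n k #|im u :|: im v|.
Proof.
set D := im u :|: im v; set c := ((k - #|im u|)`!)%:R : rat.
rewrite /Kmat stabIE card_stab -/c.
have -> : \sum_(s in [set s | perm_on (~: D) s]) 1 / (c * (fp s)%:R ^+ n)
   = \sum_(s | perm_on (~: D) s) (fun m : nat => 1 / (c * m%:R ^+ n)) (fpT s).
  by apply: eq_bigl => s; rewrite inE.
rewrite (sum_perm_on (fun m : nat => 1 / (c * m%:R ^+ n)) (cardC_ord D)) setCK /EY card_Sn.
have Hf : ((k - #|D|)`!)%:R != 0 :> rat by rewrite pnatr_eq0 -lt0n fact_gt0.
have Hc : c != 0 by rewrite pnatr_eq0 -lt0n fact_gt0.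
rewrite mulrCA mulrAC divff // mul1r mulrC mulr_sumr; apply: eq_bigr => p _.
by rewrite !mul1r invfM.
Qed.

End PartF.
Section PartG.

Lemma card_Cset k (A : {set 'I_k}) b i : (i <= b)%N ->
  #|[set C : {set 'I_k} | (#|C| == b) && (#|A :&: C| == i)]|
  = ('C(#|A|, i) * 'C(k - #|A|, b - i))%N.
Proof.
move=> Hib.
pose X := setX [set B : {set 'I_k} | B \subset A & #|B| == i]
               [set B : {set 'I_k} | B \subset ~: A & #|B| == b - i].
have HX : forall p, p \in X -> A :&: (p.1 :|: p.2) = p.1 /\ ~: A :&: (p.1 :|: p.2) = p.2.
  move=> [B1 B2]; rewrite inE /= !inE => /andP [/andP [H1 _] /andP [H2 _]].
  split; apply/setP => t; move: (subsetP H1 t) (subsetP H2 t); rewrite !inE;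
    case: (t \in A); case: (t \in B1); case: (t \in B2) => //= h1 h2;
    (try by have := h1 isT); (try by have := h2 isT).
have -> : [set C : {set 'I_k} | (#|C| == b) && (#|A :&: C| == i)]
        = [set p.1 :|: p.2 | p in X].
  apply/setP => C; rewrite inE; apply/andP/imsetP => [[/eqP HC /eqP HAC]|[p Hp ->]].
    exists (A :&: C, ~: A :&: C).
      have E := cardsID A C.
      have E1 : #|C :&: A| = i by rewrite setIC.
      have E2 : C :\: A = ~: A :&: C by rewrite setDE setIC.
      rewrite E1 E2 HC in E.
      rewrite inE /= !inE subsetIl subsetIl /=; apply/andP; split; apply/eqP => //.
      by rewrite -E addKn.
    apply/setP => t; rewrite !inE; by case: (t \in A); case: (t \in C).
  have [E1 E2] := HX p Hp.
  move: Hp; rewrite inE => /andP []; rewrite !inE => /andP [_ /eqP H1] /andP [_ /eqP H2].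
  split; last by rewrite E1 H1.
  have := cardsID A (p.1 :|: p.2).
  by rewrite setIC E1 setDE setIC E2 H1 H2 subnKC // => <-.
rewrite card_in_imset; last first.
  move=> p q Hp Hq E; have [Ep1 Ep2] := HX p Hp; have [Eq1 Eq2] := HX q Hq.
  by case: p q Hp Hq E Ep1 Ep2 Eq1 Eq2 => [p1 p2] [q1 q2] /= _ _ -> -> -> <- <-.
rewrite cardsX !cards_draws; congr (_ * 'C(_, _)).
by rewrite cardC_ord.
Qed.

Section Cnt.
Variables (n k : nat) (y : {set {set 'I_n}}).
Hypothesis Hy : is_setpart y.
Variable d : 'I_k.

Lemma card_vim (C : {set 'I_k}) : #|C| = #|y| ->
  #|[set v : vec n k | (setpart v == y) && (im v == C)]| = #|y|`!.
Proof.
move=> HC; rewrite -ffactnn -{1}HC -(card_vC Hy d C); apply: eq_card => v; rewrite !inE.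
case: (boolP (setpart v == y)) => //= /eqP Hv.
by rewrite eqEcard (card_im Hy Hv) HC leqnn andbT.
Qed.

Lemma card_vi (A : {set 'I_k}) i : (i <= #|y|)%N ->
  #|[set v : vec n k | (setpart v == y) && (#|A :&: im v| == i)]|
  = (#|y|`! * ('C(#|A|, i) * 'C(k - #|A|, #|y| - i)))%N.
Proof.
move=> Hi; rewrite -(card_Cset A Hi) cardsE -sum1_card.
rewrite (partition_big (@im n k) (fun C => (#|C| == #|y|) && (#|A :&: C| == i))) /=; last first.
  by move=> v /andP [/eqP Hv ->]; rewrite (card_im Hy Hv) eqxx.
rewrite cardsE -sum1_card big_distrr /= muln1.
apply: eq_bigr => C /andP [/eqP HC HAC].
rewrite sum1_card -(card_vim HC) -cardsE; apply: eq_card => v; rewrite !inE.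
rewrite /in_mem /=. case: (boolP (im v == C)) => [/eqP -> |]; rewrite ?andbT ?andbF //.
by rewrite HAC andbT.
Qed.
End Cnt.

End PartG.
Section PartH.
Local Open Scope ring_scope.

Definition cc n k a j : rat := ((k - j)`!)%:R / ((k - a)`!)%:R * EY n k j.
Definition Gs n k a b : rat :=
  \sum_(i < b.+1) cc n k a (a + b - i) *+ (b`! * ('C(a, i) * 'C(k - a, b - i))).

Lemma Kbar_gen n k (x y : {set {set 'I_n}}) :
  (1 <= n)%N -> (n <= k)%N -> is_setpart x -> is_setpart y ->
  Kbar k x y = Gs n k #|x| #|y|.
Proof.
move=> Hn Hnk Hx Hy.
have d : 'I_k by exists 0%N; exact: leq_trans Hn Hnk.
rewrite /Kbar; case: pickP => [u /eqP Hu|Hnone]; last first.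
  have := card_vC Hx d setT; rewrite cardsT card_ord => Hc.
  have : (0 < #|[set v : vec n k | (setpart v == x) && (im v \subset setT)]|)%N.
    by rewrite Hc ffact_gt0 (leq_trans (card_part Hx)).
  by case/card_gt0P => v; rewrite inE Hnone.
have Ha : #|im u| = #|x| by apply: card_im.
set a := #|x|; set b := #|y|.
have Hb : forall v : vec n k, setpart v == y -> (#|im u :&: im v| <= b)%N.
  move=> v /eqP Hv; rewrite -[b](card_im Hy Hv); apply: subset_leq_card; exact: subsetIr.
rewrite (partition_big (fun v : vec n k => (inord #|im u :&: im v| : 'I_b.+1)) xpredT) //=.
apply: eq_bigr => i _.
rewrite (eq_bigr (fun _ => cc n k a (a + b - i))); last first.
  move=> v /andP [/eqP Hv /eqP Hi].
  have Hle : (#|im u :&: im v| <= b)%N by apply: Hb; rewrite Hv.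
  rewrite Kmat_val /cc Ha.
  have -> : #|im u :|: im v| = (a + b - i)%N.
    rewrite -Hi inordK ?ltnS // -[a]Ha -[b](card_im Hy Hv) -cardsUI addnK //.
  by [].
rewrite sumr_const; congr (_ *+ _).
rewrite -[a]Ha -(card_vi Hy d (im u) (ltn_ord i)) cardsE; apply: eq_card => v.
rewrite /in_mem /=.
case: (boolP (setpart v == y)) => //= Hv.
rewrite -val_eqE /= inordK //.
by rewrite ltnS Hb.
Qed.

End PartH.
Section PartI.
Local Open Scope ring_scope.

Definition coef (a b j : nat) : rat :=
  (a`!)%:R * (b`!)%:R / ((j - a)`!%:R * (j - b)`!%:R * (a + b - j)`!%:R).

Lemma fact_neq0 m : (m`!)%:R != 0 :> rat.
Proof. by rewrite pnatr_eq0 -lt0n fact_gt0. Qed.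

Lemma term_eq n k a b i : (a <= k)%N -> (i <= b)%N ->
  cc n k a (a + b - i) *+ (b`! * ('C(a, i) * 'C(k - a, b - i)))
  = (if [&& (a <= a + b - i)%N, (b <= a + b - i)%N & (a + b - i <= k)%N]
     then coef a b (a + b - i) else 0) * EY n k (a + b - i).
Proof.
move=> Hak Hib.
case: (ltnP a i) => Hai.
  rewrite bin_small // mul0n muln0 mulr0n.
  have -> : (b <= a + b - i)%N = false by apply/negbTE; rewrite -ltnNge; lia.
  by rewrite andbF mul0r.
case: (leqP (a + b - i) k) => Hj; last first.
  rewrite (@bin_small (k - a) (b - i)); last by lia.
  rewrite !muln0 mulr0n.
  by rewrite !andbF mul0r.
have h1 : (a <= a + b - i)%N by lia.
have h2 : (b <= a + b - i)%N by lia.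
rewrite h1 h2 /=.
rewrite /cc /coef.
have e1 : (a + b - i - a = b - i)%N by lia.
have e2 : (a + b - i - b = a - i)%N by lia.
have e3 : (a + b - (a + b - i) = i)%N by lia.
have e4 : (k - (a + b - i) = k - a - (b - i))%N by lia.
rewrite e1 e2 e3 e4.
have f1 : (a`!)%:R = ('C(a, i))%:R * (i`!)%:R * ((a - i)`!)%:R :> rat.
  by rewrite -!natrM -mulnA bin_fact.
have f2 : ((k - a)`!)%:R = ('C(k - a, b - i))%:R * ((b - i)`!)%:R * ((k - a - (b - i))`!)%:R :> rat.
  by rewrite -!natrM -mulnA bin_fact //; lia.
have C2 : ('C(k - a, b - i))%:R != 0 :> rat by rewrite pnatr_eq0 -lt0n bin_gt0; lia.
rewrite -[_ *+ _]mulr_natr !natrM f1 f2.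
have := fact_neq0 (b - i); have := fact_neq0 (a - i); have := fact_neq0 i;
have := fact_neq0 (k - a - (b - i)); move: C2.
move: ('C(k - a, b - i))%:R ((b - i)`!)%:R ((a - i)`!)%:R (i`!)%:R ((k - a - (b - i))`!)%:R
  ('C(a, i))%:R (b`!)%:R (EY n k (a + b - i)) => c2 fb fa fi fk c1 bb ey H1 H2 H3 H4 H5.
by field; rewrite ?H1 ?H2 ?H3 ?H4 ?H5.
Qed.

Definition Ss n k a b : rat := \sum_(0 <= j < (a + b).+1)
  (if [&& (a <= j)%N, (b <= j)%N & (j <= k)%N] then coef a b j else 0) * EY n k j.

Lemma Gs_Ss n k a b : (a <= k)%N -> Gs n k a b = Ss n k a b.
Proof.
move=> Hak; rewrite /Ss big_nat_rev /=.
rewrite (eq_bigr (fun i => (if [&& (a <= a + b - i)%N, (b <= a + b - i)%N & (a + b - i <= k)%N]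
     then coef a b (a + b - i) else 0) * EY n k (a + b - i))); last first.
  by move=> i _; rewrite add0n subSS.
rewrite (big_cat_nat _ (n := b.+1)) //=; last lia.
rewrite [X in _ + X]big_nat_cond [X in _ + X]big1 ?addr0; last first.
  move=> j /andP [/andP [Hj Hj'] _].
  have -> : (a <= a + b - j)%N = false by apply/negbTE; rewrite -ltnNge; lia.
  by rewrite mul0r.
rewrite big_mkord /Gs; apply: eq_bigr => i _.
by rewrite term_eq // -ltnS.
Qed.

Lemma Ss_sym n k a b : Ss n k a b = Ss n k b a.
Proof.
rewrite /Ss [(a + b)%N]addnC; apply: eq_bigr => j _.
rewrite andbCA /coef [(b + a)%N]addnC [((b`!)%:R * _)]mulrC.
by rewrite [(((j - b)`!)%:R * _)]mulrC.
Qed.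

Lemma Ss_target n k a b : (a <= b)%N -> (b <= k)%N ->
  Ss n k a b = \sum_(b <= j < (minn (a + b) k).+1) coef a b j * EY n k j.
Proof.
move=> Hab Hbk; rewrite /Ss (big_cat_nat _ (n := b)) //=; last lia.
rewrite [X in X + _]big_nat_cond [X in X + _]big1 ?add0r; last first.
  move=> j /andP [/andP [_ Hj] _].
  have -> : (b <= j)%N = false by apply/negbTE; rewrite -ltnNge.
  by rewrite andbF mul0r.
rewrite (big_cat_nat _ (n := (minn (a + b) k).+1)) //=; [|lia|lia].
rewrite [X in _ + X]big_nat_cond [X in _ + X]big1 ?addr0; last first.
  move=> j /andP [/andP [Hj1 Hj2] _].
  have -> : (j <= k)%N = false by apply/negbTE; rewrite -ltnNge; lia.
  by rewrite !andbF mul0r.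
apply: eq_big_nat => j /andP [Hj1 Hj2].
have -> : [&& (a <= j)%N, (b <= j)%N & (j <= k)%N] by apply/and3P; split; lia.
by [].
Qed.

End PartI.

Local Open Scope ring_scope.

Theorem proposition3p1 (n k : nat) (x y : {set {set 'I_n}}) :
  (1 <= n)%N -> (n <= k)%N ->
  is_setpart x -> is_setpart y ->
  ((#|x| <= #|y|)%N ->
     Kbar k x y =
     \sum_(#|y| <= j < (minn (#|x| + #|y|) k).+1)
        ((#|x|`!)%:R * (#|y|`!)%:R
          / ((j - #|x|)`!%:R * (j - #|y|)`!%:R * (#|x| + #|y| - j)`!%:R))
        * EY n k j)
  /\ ((#|y| < #|x|)%N -> Kbar k x y = Kbar k y x).
Proof.
move=> Hn Hnk Hx Hy.
have Hxk : (#|x| <= k)%N := leq_trans (card_part Hx) Hnk.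
have Hyk : (#|y| <= k)%N := leq_trans (card_part Hy) Hnk.
split.
  move=> Hab; rewrite Kbar_gen // Gs_Ss // Ss_target //.
by move=> Hba; rewrite !Kbar_gen // !Gs_Ss // Ss_sym.
Qed.
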